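(* Let $\Gamma$ be a network zero-sum game with a fully-mixed Nash equilibrium $x^*$ with rational coordinates such that $\sum_{j\neq i}A^{(ij)}x_j^*=\mathbf{0}$ for every agent $i$. Suppose the regularizers used in Stochastic FTRL satisfy $\nabla h_i^*(y_i)>\mathbf{0}$ (coordinatewise) for all $y\in\mathcal{Y}$ and all $i\in\mathcal{N}$. Then the Markov chain with state space $\mathcal{Y}$ and transition probabilities $\bar P$ is irreducible.
   Context: A network game has agents $\mathcal{N}=\{1,\dots,N\}$, finite pure strategy sets $\mathcal{S}_i$, simplices $\mathcal{X}_i$ of mixed strategies, $\mathcal{S}=\prod_i\mathcal{S}_i$, and payoff matrices $A^{(ij)}\in\mathbb{R}^{S_i\times S_j}$ ($i\ne j$); agent $i$'s expected payoff under $x$ is $\langle x_i,\sum_{j\ne i}A^{(ij)}x_j\rangle$. It is network zero-sum if $A^{(ij)}=-(A^{(ji)})^\top$. A Nash equilibrium $x^*$ satisfies $\langle x_i^*,\sum_{j\ne i}A^{(ij)}x_j^*\rangle\ge\langle x_i,\sum_{j\ne i}A^{(ij)}x_j^*\rangle$ for all $x_i\in\mathcal{X}_i$, $i$; it is fully mixed if all coordinates are positive. Each agent has a strictly convex regularizer $h_i$ on $\mathcal{X}_i$ (learning rate absorbed), conjugate $h_i^*(y_i)=\sup_{x_i\in\mathcal{X}_i}\{\langle y_i,x_i\rangle-h_i(x_i)\}$, and $\nabla h_i^*(y_i)=\arg\max_{x_i\in\mathcal{X}_i}\{\langle y_i,x_i\rangle-h_i(x_i)\}$ is the strategy played at payoff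 vector $y_i$. Fix an initial $y^0=(y_1^0,\dots,y_N^0)$. Define $\mathcal{Y}^0=\{y^0\}$ and $\mathcal{Y}^t=\{(y_i+\sum_{j\neq i}A^{(ij)}e_{s_j})_{i\in\mathcal{N}}: y\in\mathcal{Y}^{t-1},\ s\in\mathcal{S}\}$, and $\mathcal{Y}=\bigcup_{t\ge0}\mathcal{Y}^t$. The transition probabilities are $\bar P(y,y')=\sum_{s\in\mathcal{S}:\ y_i'=y_i+\sum_{j\ne i}A^{(ij)}e_{s_j}\ \forall i}\ \prod_{j=1}^N x_{js_j}$, where $x_j=\nabla h_j^*(y_j)$. *)

(* Defs.v *)
From HB Require Import structures.
From mathcomp Require Import all_boot all_order all_algebra.
From mathcomp Require Import reals.
Set Implicit Arguments. Unset Strict Implicit. Unset Printing Implicit Defensive.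
Import Order.TTheory GRing.Theory Num.Theory.
Local Open Scope ring_scope.

Section NetGame.
Variables (R : realType) (N : nat) (S : 'I_N -> nat).

(* payoff matrices A^(ij) : S_i x S_j (entries A i i are irrelevant) *)
Definition payoffs := forall i j : 'I_N, 'M[R]_(S i, S j).

(* profiles of mixed strategies / payoff vectors: one column vector per agent *)
Definition state := {dffun forall i : 'I_N, 'cV[R]_(S i)}.

Definition profile := {dffun forall i : 'I_N, 'I_(S i)}.

Definition in_simplex (n : nat) (x : 'cV[R]_n) : Prop :=
  (forall k, 0 <= x k 0) /\ \sum_k x k 0 = 1.

Definition fully_mixed (n : nat) (x : 'cV[R]_n) : Prop := forall k, 0 < x k 0.

Definition network_zero_sum (A : payoffs) : Prop :=
  forall i j : 'I_N, i != j -> A i j = - (A j i)^T.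

Definition exp_payoff (A : payoffs) (x : forall i, 'cV[R]_(S i)) (i : 'I_N)
    (xi : 'cV[R]_(S i)) : R :=
  (xi^T *m \sum_(j | j != i) A i j *m x j) 0 0.

Definition is_Nash (A : payoffs) (x : forall i, 'cV[R]_(S i)) : Prop :=
  (forall i, in_simplex (x i)) /\
  forall i (xi : 'cV[R]_(S i)), in_simplex xi ->
    exp_payoff A x xi <= exp_payoff A x (x i).

Definition rational_coords (n : nat) (x : 'cV[R]_n) : Prop :=
  forall k, exists q : rat, x k 0 = ratr q.

Definition strictly_convex_on_simplex (n : nat) (h : 'cV[R]_n -> R) : Prop :=
  forall x1 x2 : 'cV[R]_n, in_simplex x1 -> in_simplex x2 -> x1 != x2 ->
  forall t : R, 0 < t < 1 ->
    h (t *: x1 + (1 - t) *: x2) < t * h x1 + (1 - t) * h x2.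

(* Q y = argmax_{x in simplex} <y, x> - h x, i.e. Q = grad h^* *)
Definition is_argmax_choice (n : nat) (h : 'cV[R]_n -> R)
    (Q : 'cV[R]_n -> 'cV[R]_n) : Prop :=
  forall y : 'cV[R]_n, in_simplex (Q y) /\
    forall x, in_simplex x ->
      (y^T *m x) 0 0 - h x <= (y^T *m Q y) 0 0 - h (Q y).

Definition step (A : payoffs) (y : state) (s : profile) : state :=
  [ffun i => y i + \sum_(j | j != i) A i j *m delta_mx (s j) (0 : 'I_1)].

(* Y = union of Y^t *)
Inductive reachable (A : payoffs) (y0 : state) : state -> Prop :=
| reach0 : reachable A y0 y0
| reachS : forall y s, reachable A y0 y -> reachable A y0 (step A y s).

Definition Pbar (A : payoffs) (Q : forall i, 'cV[R]_(S i) -> 'cV[R]_(S i))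
    (y y' : state) : R :=
  \sum_(s : profile | step A y s == y') \prod_(j : 'I_N) Q j (y j) (s j) 0.

Definition accessible (A : payoffs) (Q : forall i, 'cV[R]_(S i) -> 'cV[R]_(S i))
    (y y' : state) : Prop :=
  exists (n : nat) (z : nat -> state),
    z 0%N = y /\ z n = y' /\ forall k, (k < n)%N -> 0 < Pbar A Q (z k) (z k.+1).

Definition irreducible_on (A : payoffs) (Q : forall i, 'cV[R]_(S i) -> 'cV[R]_(S i))
    (Y : state -> Prop) : Prop :=
  forall y y', Y y -> Y y' -> accessible A Q y y'.

End NetGame.

(* Main.v *)
Require Import Defs.
From HB Require Import structures.
From mathcomp Require Import all_boot all_order all_algebra.
From mathcomp Require Import reals.
From mathcomp Require Import zify.
From Stdlib Require Import ClassicalEpsilon.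
Import Order.TTheory GRing.Theory Num.Theory.
Local Open Scope ring_scope.
Set Implicit Arguments. Unset Strict Implicit. Unset Printing Implicit Defensive.

Section Aux.
Variables (R : realType) (N : nat) (S : 'I_N -> nat) (A : payoffs R S).

Definition cnt (j : 'I_N) (L : seq (profile S)) : 'cV[R]_(S j) :=
  \sum_(s <- L) delta_mx (s j) 0.
Definition run (y : state R S) L := foldl (step A) y L.

Lemma run_eq y L : run y L =
  [ffun i => y i + \sum_(j | j != i) A i j *m cnt j L].
Proof.
elim: L y => [|s L IH] y /=.
  apply/ffunP => i; rewrite [in RHS]ffunE big1 ?addr0 // => j _.
  by rewrite /cnt big_nil mulmx0.
rewrite IH; apply/ffunP => i; rewrite [LHS]ffunE [RHS]ffunE /step [in X in X + _]ffunE -addrA; congr (_ + _).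
rewrite -big_split /=; apply: eq_bigr => j _; by rewrite /cnt big_cons mulmxDr.
Qed.

Lemma cnt_entry j L k : cnt j L k 0 = (count (fun s : profile S => s j == k) L)%:R.
Proof.
elim: L => [|s L IH]; first by rewrite /cnt big_nil mxE.
rewrite /cnt big_cons mxE -/(cnt j L) IH /= natrD mxE eqxx andbT eq_sym.
by [].
Qed.

Lemma reachable_run y0 y : reachable A y0 y -> exists L, y = run y0 L.
Proof.
elim => [|z s _ [L ->]]; first by exists [::].
by exists (rcons L s); rewrite /run foldl_rcons.
Qed.

Lemma reachable_run' y0 y L : reachable A y0 y -> reachable A y0 (run y L).
Proof. elim: L y => //= s L IH y Hy; apply: IH; exact: reachS. Qed.

Lemma Pbar_pos (Q : forall i : 'I_N, 'cV[R]_(S i) -> 'cV[R]_(S i)) (y : state R S) (s : profile S) : (forall i k, 0 < Q i (y i) k 0) ->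
  0 < Pbar A Q y (step A y s).
Proof.
move=> HQ; rewrite /Pbar (bigD1 s) //=; apply: ltr_wpDr.
  apply: sumr_ge0 => s' _; apply: prodr_ge0 => j _; exact: ltW.
by apply: prodr_gt0 => j _.
Qed.

Lemma access_run (Q : forall i : 'I_N, 'cV[R]_(S i) -> 'cV[R]_(S i)) (y0 y : state R S) L :
  (forall z, reachable A y0 z -> forall i k, 0 < Q i (z i) k 0) ->
  reachable A y0 y -> accessible A Q y (run y L).
Proof.
move=> HQ Hy; exists (size L), (fun k => run y (take k L)).
split; first by rewrite take0.
split; first by rewrite take_size.
move=> k Hk; case: L Hk => [//|s0 L'] Hk.
rewrite (take_nth s0 Hk) /run foldl_rcons -/(run _ _).
apply: Pbar_pos; apply: HQ; exact: reachable_run'.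
Qed.

Lemma sum_count j (L : seq (profile S)) :
  (\sum_k count (fun s : profile S => s j == k) L = size L)%N.
Proof.
elim: L => [|s L IH] /=; first by rewrite big1.
rewrite big_split /= IH (bigD1 (s j)) //=; case: eqP => [_|//]; rewrite big1 // => k.
by rewrite eq_sym => /negbTE ->.
Qed.

Lemma build_profiles (Hpos : forall j, (0 < S j)%N) m
  (d : forall j, 'I_(S j) -> nat) : (forall j, \sum_k d j k = m)%N ->
  exists L : seq (profile S), size L = m /\
    forall j k, count (fun s : profile S => s j == k) L = d j k.
Proof.
elim: m d => [|m IH] d Hd.
  exists [::]; split=> // j k /=.
  have /eqP := Hd j; rewrite sum_nat_eq0 => /forallP /(_ k) /implyP.
  by move=> /(_ isT) /eqP.
pose kj j := odflt (Ordinal (Hpos j)) [pick k | (0 < d j k)%N].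
have Hkj : forall j, (0 < d j (kj j))%N.
  move=> j; rewrite /kj; case: pickP => [k //|H0].
  exfalso; have := Hd j; rewrite big1 // => k _.
  by move: (H0 k) => /=; case: (d j k).
pose d' j k := (d j k - (k == kj j))%N.
have Hd' : forall j, (\sum_k d' j k = m)%N.
  move=> j; rewrite (bigD1 (kj j)) //= /d' eqxx.
  under eq_bigr => k Hk do rewrite (negbTE Hk) subn0.
  move: (Hd j) (Hkj j); rewrite (bigD1 (kj j)) //=; lia.
have [L [HL Hc]] := IH d' Hd'.
exists ([ffun j => kj j] :: L); split; first by rewrite /= HL.
move=> j k /=; rewrite Hc ffunE /d'.
case: (eqVneq (kj j) k) => [<-|ne].
  rewrite /=; have := Hkj j; lia.
by rewrite /= subn0.
Qed.

Lemma common_den (xs : forall j : 'I_N, 'cV[R]_(S j)) :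
  (forall j, rational_coords (xs j)) -> (forall j, fully_mixed (xs j)) ->
  exists D : nat, exists n : forall j, 'I_(S j) -> nat,
    (forall j k, 0 < n j k)%N /\ forall j k, D%:R * xs j k 0 = (n j k)%:R.
Proof.
move=> Hr Hf.
pose q j k := proj1_sig (constructive_indefinite_description _ (Hr j k)).
have Hq : forall j k, xs j k 0 = ratr (q j k).
  by move=> j k; rewrite /q; case: constructive_indefinite_description.
pose dq j k := `|denq (q j k)|%N.
have Hdq : forall j k, (0 < dq j k)%N by move=> j k; rewrite absz_gt0 denq_neq0.
pose D := (\prod_(j < N) \prod_(k < S j) dq j k)%N.
have HD : (0 < D)%N by apply: prodn_gt0 => j; apply: prodn_gt0 => k.
have Hdvd : forall j k, (dq j k %| D)%N.
  move=> j k; rewrite /D (bigD1 j) //= (bigD1 k) //= -mulnA; exact: dvdn_mulr.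
have Hqp : forall j k, 0 < q j k by move=> j k; rewrite -(ltr0q R) -Hq; exact: Hf.
exists D; exists (fun j k => (D %/ dq j k * `|numq (q j k)|)%N); split.
  move=> j k; rewrite muln_gt0 (divn_gt0 _ (Hdq j k)) dvdn_leq // absz_gt0 numq_eq0.
  by rewrite gt_eqF.
move=> j k; rewrite Hq /ratr natrM -[in LHS](divnK (Hdvd j k)) natrM.
rewrite natr_absz gtr0_norm ?numq_gt0 // /dq natr_absz gtr0_norm ?denq_gt0 //.
rewrite -mulrA; congr (_ * _).
by rewrite [X in _ * X]mulrC mulrA mulfV ?mul1r // intr_eq0 denq_neq0.
by rewrite numq_gt0.
Qed.

End Aux.

Theorem theorem4 (R : realType) (N : nat) (S : 'I_N -> nat)
  (A : payoffs R S) (xstar : forall i : 'I_N, 'cV[R]_(S i))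
  (h : forall i : 'I_N, 'cV[R]_(S i) -> R)
  (Q : forall i : 'I_N, 'cV[R]_(S i) -> 'cV[R]_(S i))
  (y0 : state R S) :
  network_zero_sum A ->
  is_Nash A xstar ->
  (forall i, fully_mixed (xstar i)) ->
  (forall i, rational_coords (xstar i)) ->
  (forall i, \sum_(j | j != i) A i j *m xstar j = 0) ->
  (forall i, strictly_convex_on_simplex (h i)) ->
  (forall i, is_argmax_choice (h i) (Q i)) ->
  (forall y, reachable A y0 y -> forall i k, 0 < Q i (y i) k 0) ->
  irreducible_on A Q (reachable A y0).
Proof.
move=> _ [Hsimp _] Hfm Hrat Hzero _ _ HQ y y' Hy Hy'.
have Hpos : forall j, (0 < S j)%N.
  move=> j; case: (Hsimp j) => _.
  case: (pickP (@predT 'I_(S j))) => [k _ _|H0].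
    exact: leq_ltn_trans (leq0n k) (ltn_ord k).
  rewrite big_pred0 // => /eqP; by rewrite eq_sym oner_eq0.
have [D [n [Hn HDn]]] := common_den Hrat Hfm.
have [L1 E1] := reachable_run Hy; have [L2 E2] := reachable_run Hy'.
subst y y'.
set T := size L1.
pose c j k := count (fun s : profile S => s j == k) L1.
have Hsumn : forall j, (\sum_k n j k = D)%N.
  move=> j; apply/eqP; rewrite -(eqr_nat R) natr_sum.
  under eq_bigr do rewrite -HDn.
  by rewrite -mulr_sumr; case: (Hsimp j) => _ ->; rewrite mulr1.
pose d j k := (T * n j k - c j k)%N.
have Hcd : forall j k, (c j k <= T * n j k)%N.
  by move=> j k; apply: leq_trans (count_size _ _) _; rewrite /T leq_pmulr.
have Hsumd : forall j, (\sum_k d j k = T * D - T)%N.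
  move=> j.
  have H1 : (\sum_k (d j k + c j k) = T * D)%N.
    by rewrite -(Hsumn j) big_distrr; apply: eq_bigr => k _; rewrite subnK.
  move: H1; rewrite big_split /= /c sum_count -/T; lia.
have [L3 [_ HL3]] := build_profiles Hpos Hsumd.
have Hret : run A (run A y0 L1) L3 = y0.
  rewrite /run -foldl_cat -/(run A y0 (L1 ++ L3)) run_eq.
  apply/ffunP => i; rewrite [LHS]ffunE.
  have -> : \sum_(j | j != i) A i j *m cnt R j (L1 ++ L3) =
            (T * D)%:R *: \sum_(j | j != i) A i j *m xstar j.
    rewrite scaler_sumr; apply: eq_bigr => j _; rewrite scalemxAr; congr (_ *m _).
    apply/matrixP => k l; rewrite ord1 cnt_entry !mxE count_cat HL3 /d addnC.
    by rewrite subnK // natrM -HDn natrM mulrA.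
  by rewrite Hzero scaler0 addr0.
have := @access_run R N S A Q y0 _ (L3 ++ L2) HQ Hy.
by rewrite /run foldl_cat -/(run A _ L3) Hret.
Qed.
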